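(* Let $D_i$, $i\in\mathbb{Z}$, be i.i.d. non-negative integer-valued random variables with law $F$ having finite second moment. Fix $\alpha>0$. For $d\in\mathbb{N}$ let $D_i^d=\max\{D_i-d,0\}$ and $\mu_d=\mathbb{E}[D_i^d]$. If $d$ is such that $\mu_d<\alpha/18$, then $\mathbb{E}[|C^{d,\alpha}|]<\infty$.
   Context: A vertex $i\in\mathbb{Z}$ is $\alpha$-claimed on level $d$ iff $\sum_{k=i-m}^{i+m}D_k^d\ge\alpha m$ for some integer $m\ge1$. A cluster of $\alpha$-claimed vertices is a maximal set of consecutive $\alpha$-claimed vertices; $C^{d,\alpha}$ denotes the cluster containing the origin (empty if the origin is not $\alpha$-claimed). *)

(* Defs.v *)
From HB Require Import structures.
From mathcomp Require Import all_boot all_order all_algebra.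
From mathcomp Require Import all_classical all_reals all_analysis.
Set Implicit Arguments. Unset Strict Implicit. Unset Printing Implicit Defensive.
Import Order.TTheory GRing.Theory Num.Theory.
Local Open Scope classical_set_scope.
Local Open Scope ring_scope.

Section Defs.
Context {dT : measure_display} {T : measurableType dT} {R : realType}.

Definition nat_rv_family (D : int -> T -> nat) : Prop :=
  forall (i : int) (A : set nat), measurable (D i @^-1` A).

Definition mutually_independent (P : probability T R) (D : int -> T -> nat) : Prop :=
  forall (s : seq int) (A : int -> set nat), uniq s ->
    P (\bigcap_(i in [set` s]) (D i @^-1` A i)) = (\prod_(i <- s) P (D i @^-1` A i))%E.

Definition identically_distributed (P : probability T R) (D : int -> T -> nat) : Prop :=
  forall (i : int) (A : set nat), P (D i @^-1` A) = P (D 0 @^-1` A).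

(* D_i^d = max(D_i - d, 0); truncated nat subtraction *)
Definition Dtrunc (D : int -> T -> nat) (d : nat) (k : int) (x : T) : nat :=
  (D k x - d)%N.

Definition claimed (D : int -> T -> nat) (d : nat) (alpha : R) (x : T) (i : int) : Prop :=
  exists m : nat, (1 <= m)%N /\
    alpha * m%:R <= \sum_(0 <= t < (2 * m).+1) (Dtrunc D d (i - m%:Z + t%:Z) x)%:R.

(* cluster of alpha-claimed vertices containing the origin (empty if 0 not claimed) *)
Definition cluster0 (D : int -> T -> nat) (d : nat) (alpha : R) (x : T) : set int :=
  [set j : int | forall k : int, Num.min 0 j <= k <= Num.max 0 j -> claimed D d alpha x k].

(* |C^{d,alpha}| as an extended real (+oo if infinite) *)
Definition cluster_size (D : int -> T -> nat) (d : nat) (alpha : R) (x : T) : \bar R :=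
  \esum_(j in cluster0 D d alpha x) (1%E : \bar R).

End Defs.

(* Main.v *)
Require Import Defs.
From HB Require Import structures.
From mathcomp Require Import all_boot all_order all_algebra.
From mathcomp Require Import all_classical all_reals all_analysis.
From mathcomp Require Import measurable_realfun.
From mathcomp Require Import ring lra zify.
Set Implicit Arguments. Unset Strict Implicit. Unset Printing Implicit Defensive.
Import Order.TTheory GRing.Theory Num.Theory.
Local Open Scope classical_set_scope.
Local Open Scope ring_scope.

Section Kingman.
Variables (R : realFieldType) (K : nat) (q : nat -> R) (kappa : R).

Fixpoint Mf (w : seq nat) : R :=
  if w is v :: u then Num.max 0 (v%:R - kappa + Mf u) else 0.

Fixpoint vecs n : seq (seq nat) :=
  if n is n'.+1 then [seq v :: u | v <- iota 0 K.+1, u <- vecs n'] else [:: [::]].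

Definition En n (F : seq nat -> R) := \sum_(w <- vecs n) F w * \prod_(v <- w) q v.

Lemma vecsS n : vecs n.+1 = [seq v :: u | v <- iota 0 K.+1, u <- vecs n].
Proof. by []. Qed.

Lemma En0 F : En 0 F = F [::].
Proof. by rewrite /En /= big_seq1 big_nil mulr1. Qed.

Lemma En_S n F : En n.+1 F =
  \sum_(v <- iota 0 K.+1) q v * En n (fun u => F (v :: u)).
Proof.
rewrite /En vecsS big_allpairs_dep; apply: eq_bigr => v _.
rewrite mulr_sumr; apply: eq_bigr => u _; rewrite big_cons; ring.
Qed.

Lemma Mf_ge0 w : 0 <= Mf w.
Proof. by case: w => [|v u] //=; rewrite le_max lexx. Qed.

Lemma Mf_mono w w' : (size w <= size w')%N ->
  (forall j, (j < size w)%N -> (nth 0 w j <= nth 0 w' j)%N) -> Mf w <= Mf w'.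
Proof.
elim: w w' => [|v u IH] w'; first by move=> *; exact: Mf_ge0.
case: w' => [|v' u'] //= hs hn; apply: le_max2 => //.
have h1 : v%:R <= v'%:R :> R by rewrite ler_nat; exact: (hn 0%N).
have h2 : Mf u <= Mf u' by apply: IH => // j hj; exact: (hn j.+1).
lra.
Qed.

Lemma Mf_sum w k : (k <= size w)%N ->
  \sum_(0 <= j < k) (nth 0 w j)%:R - kappa * k%:R <= Mf w.
Proof.
elim: w k => [|v u IH] [|k] hk //; first (by rewrite big_geq // mulr0 subr0 Mf_ge0);
  first (by rewrite big_geq // mulr0 subr0 Mf_ge0).
rewrite big_nat_recl //= le_max; apply/orP; right.
have := IH k hk; rewrite -[k.+1]addn1 natrD; lra.
Qed.

Hypothesis q_ge0 : forall v, 0 <= q v.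
Hypothesis q_sum : \sum_(v <- iota 0 K.+1) q v = 1.

Lemma En_le n F G : (forall w, F w <= G w) -> En n F <= En n G.
Proof.
move=> h; apply: ler_sum => w _; apply: ler_wpM2r; last exact: h.
by apply: prodr_ge0 => *.
Qed.

Lemma En_lin n a b F G : En n (fun w => a * F w + b * G w) = a * En n F + b * En n G.
Proof.
rewrite /En mulr_sumr mulr_sumr -big_split; apply: eq_bigr => w _ /=; ring.
Qed.

Lemma En_cst n c : En n (fun _ => c) = c.
Proof.
elim: n => [|n IH]; first by rewrite En0.
by rewrite En_S (eq_bigr (fun v => q v * c)) ?IH // -mulr_suml q_sum mul1r.
Qed.

Lemma En_take n F : En n.+1 (fun w => F (take n w)) = En n F.
Proof.
elim: n F => [|n IH] F.
  rewrite En_S /= (eq_bigr (fun v => q v * F [::])); last by move=> v _; rewrite En0.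
  by rewrite -mulr_suml q_sum mul1r En0.
rewrite En_S [in RHS]En_S; apply: eq_bigr => v _; congr (_ * _).
exact: (IH (fun u => F (v :: u))).
Qed.

Lemma En_quad n A B (F G : seq nat -> R) :
  En n (fun u => A + B * F u + G u) = A + B * En n F + En n G.
Proof.
have h1 := En_cst n 1.
rewrite /En in h1 *.
rewrite (eq_bigr (fun w => A * (1 * \prod_(v <- w) q v) + B * (F w * \prod_(v <- w) q v)
   + G w * \prod_(v <- w) q v)); last by move=> w _; ring.
have h1' : \sum_(w <- vecs n) \prod_(v <- w) q v = 1.
  by rewrite -[RHS]h1; apply: eq_bigr => *; rewrite mul1r.
by rewrite !big_split /= -!mulr_sumr mul1r h1' mulr1.
Qed.

Definition m1 := \sum_(v <- iota 0 K.+1) q v * v%:R.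
Definition c2 := \sum_(v <- iota 0 K.+1) q v * (v%:R - kappa) ^+ 2.

Hypothesis m1_lt : m1 < kappa.

Lemma kingman n : En n Mf <= c2 / (2 * (kappa - m1)).
Proof.
pose a n := En n (fun w => Mf w ^+ 2).
have step1 : a n.+1 <= c2 + 2 * (m1 - kappa) * En n Mf + a n.
  rewrite /a En_S.
  apply: (@le_trans _ _ (\sum_(v <- iota 0 K.+1) q v *
      ((v%:R - kappa) ^+ 2 + 2 * (v%:R - kappa) * En n Mf + a n))).
    apply: ler_sum => v _; apply: ler_wpM2l => //.
    have -> : (v%:R - kappa) ^+ 2 + 2 * (v%:R - kappa) * En n Mf + a n =
       En n (fun u => (v%:R - kappa) ^+ 2 + 2 * (v%:R - kappa) * Mf u + Mf u ^+ 2).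
      by rewrite En_quad.
    apply: En_le => u /=.
    have h0 := Mf_ge0 u.
    set y := v%:R - kappa + Mf u.
    have -> : (v%:R - kappa) ^+ 2 + 2 * (v%:R - kappa) * Mf u + Mf u ^+ 2 = y ^+ 2
      by rewrite /y; ring.
    by case: (lerP 0 y) => hy; rewrite ?lexx // expr0n sqr_ge0.
  set E := En n Mf; set an := a n.
  rewrite (eq_bigr (fun v => q v * (v%:R - kappa) ^+ 2 + (2 * E) * (q v * v%:R)
     + (- (2 * E * kappa)) * q v + an * q v)); last by move=> v _; ring.
  rewrite !big_split -!mulr_sumr q_sum /m1 /c2.
  rewrite /an /a [leLHS]/=; rewrite le_eqVlt; apply/orP; left; apply/eqP; ring.
have step2 : a n <= a n.+1.
  rewrite /a -(En_take n (fun w => Mf w ^+ 2)).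
  apply: En_le => w.
  have h : Mf (take n w) <= Mf w.
    apply: Mf_mono; first by rewrite size_take; case: ltnP => // /ltnW.
    by move=> j hj; rewrite nth_take // (leq_trans hj) // size_take geq_minl.
  by apply: ler_pM => //; exact: Mf_ge0.
have hk : 0 < kappa - m1 by rewrite subr_gt0.
rewrite ler_pdivlMr; last by rewrite mulr_gt0.
have := le_trans step2 step1.
nra.
Qed.

End Kingman.


Section Cover.
Variables (R : realFieldType) (f : int -> R).
Hypothesis f_ge0 : forall k, 0 <= f k.

Definition SW (s e : int) : R := \sum_(0 <= j < absz (e - s)) f (s + j%:Z).

Lemma SW_ge0 s e : 0 <= SW s e.
Proof. by apply: sumr_ge0 => *. Qed.

Lemma SW_split s u e : s <= u -> u <= e -> SW s e = SW s u + SW u e.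
Proof.
move=> hsu hue; rewrite /SW (big_cat_nat _ (n := absz (u - s))) //=; last by lia.
congr (_ + _).
rewrite -{1}[absz (u - s)]add0n big_addn.
have -> : (absz (e - s) - absz (u - s))%N = absz (e - u) by lia.
by apply: eq_bigr => i _; congr f; lia.
Qed.

Lemma SW_mono s' s e e' : s' <= s -> s <= e -> e <= e' -> SW s e <= SW s' e'.
Proof.
move=> h1 h2 h3; rewrite (SW_split h1 (le_trans h2 h3)) (SW_split h2 h3).
by rewrite addrC -addrA lerDl addr_ge0 // SW_ge0.
Qed.

Lemma SW_empty s : SW s s = 0.
Proof. by rewrite /SW subrr big_geq. Qed.

Lemma exists_max (g : nat -> nat) N : (0 < N)%N ->
  exists2 j, (j < N)%N & forall i, (i < N)%N -> (g i <= g j)%N.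
Proof.
elim: N => [//|[|N] IH] _.
  by exists 0%N => // i; rewrite ltnS leqn0 => /eqP ->.
have [j hj hmax] := IH isT.
case: (leqP (g N.+1) (g j)) => h.
  exists j; first by rewrite ltnW.
  by move=> i; rewrite ltnS leq_eqVlt => /orP [/eqP -> //|]; exact: hmax.
exists N.+1 => // i; rewrite ltnS leq_eqVlt => /orP [/eqP -> //|/hmax hi].
exact: (leq_trans hi (ltnW h)).
Qed.

Variables (alpha : R) (r : int -> nat) (A E : int).
Hypothesis alpha_ge0 : 0 <= alpha.
Hypothesis hr : forall p, A <= p -> p < E ->
  (1 <= r p)%N /\ alpha * (r p)%:R <= SW (p - (r p)%:Z) (p + (r p)%:Z + 1).

Lemma cover_lem n : forall a e (Rb : nat), a < e -> (absz (e - a) <= n)%N -> A <= a -> e <= E ->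
  (forall p, a <= p -> p < e -> (r p <= Rb)%N) ->
  exists s t si ti, [/\ s <= a, e <= t, s <= si, si <= ti & ti <= t] /\
    [/\ a - Rb%:Z <= si, ti <= e + Rb%:Z & alpha * (t - s)%:~R <= 9 * SW si ti].
Proof.
elim: n => [|n IH] a e Rb hae hn hA hE hRb; first by lia.
have [j hj hmax] := exists_max (fun j => r (a + j%:Z)) (N := absz (e - a)) ltac:(lia).
set k := a + j%:Z; set m := r k.
have hka : a <= k by rewrite /k; lia.
have hke : k < e by rewrite /k; lia.
have [hm1 hcen] := hr (le_trans hA hka) (lt_le_trans hke hE).
rewrite -/m in hm1 hcen.
have hmRb : (m <= Rb)%N by exact: hRb.
have hmax' : forall p, a <= p -> p < e -> (r p <= m)%N.
  move=> p h1 h2; have := hmax (absz (p - a)) ltac:(lia).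
  by have -> : a + (absz (p - a))%:Z = p by lia.
have [s1 [t1 [s1i [t1i [[L1 L2 L3 L4 L5] [L6 L7]]]]]] : exists s1 t1 s1i t1i,
    [/\ s1 <= a, k - 2 * m%:Z <= t1, s1 <= s1i, s1i <= t1i & t1i <= k - m%:Z] /\
    (a - Rb%:Z <= s1i /\ alpha * (t1 - s1)%:~R <= 9 * SW s1i t1i).
  case: (ltP a (k - 2 * m%:Z)) => hl.
    have [s [t [si [ti [[H1 H2 H3 H4 H5] [H6 H7 H8]]]]]] :=
      IH a (k - 2 * m%:Z) m hl ltac:(lia) hA ltac:(lia)
         (fun p h1 h2 => hmax' p h1 ltac:(lia)).
    exists s, t, si, ti; split; first by split => //; lia.
    by split => //; lia.
  exists (k - 2 * m%:Z), (k - 2 * m%:Z), (k - m%:Z), (k - m%:Z).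
  split; first by split => //; lia.
  by rewrite subrr mulr0 SW_empty mulr0; split => //; lia.
have [s2 [t2 [s2i [t2i [[R1 R2 R3 R4 R5] [R6 R7]]]]]] : exists s2 t2 s2i t2i,
    [/\ s2 <= k + 2 * m%:Z + 1, e <= t2, k + m%:Z + 1 <= s2i, s2i <= t2i & t2i <= t2] /\
    (t2i <= e + Rb%:Z /\ alpha * (t2 - s2)%:~R <= 9 * SW s2i t2i).
  case: (ltP (k + 2 * m%:Z + 1) e) => hl.
    have [s [t [si [ti [[H1 H2 H3 H4 H5] [H6 H7 H8]]]]]] :=
      IH (k + 2 * m%:Z + 1) e m hl ltac:(lia) ltac:(lia) hE
         (fun p h1 h2 => hmax' p ltac:(lia) h2).
    exists s, t, si, ti; split; first by split => //; lia.
    by split => //; lia.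
  exists (k + 2 * m%:Z + 1), (k + 2 * m%:Z + 1), (k + m%:Z + 1), (k + m%:Z + 1).
  split; first by split => //; lia.
  by rewrite subrr mulr0 SW_empty mulr0; split => //; lia.
exists s1, t2, s1i, t2i; split; first by split => //; lia.
split => //.
have hsplit : SW s1i t2i = SW s1i t1i + SW t1i (k - m%:Z) + SW (k - m%:Z) (k + m%:Z + 1)
   + SW (k + m%:Z + 1) s2i + SW s2i t2i.
  rewrite (@SW_split s1i t1i t2i) //; last by lia.
  rewrite (@SW_split t1i (k - m%:Z) t2i) //; last by lia.
  rewrite (@SW_split (k - m%:Z) (k + m%:Z + 1) t2i) //; try lia.
  rewrite (@SW_split (k + m%:Z + 1) s2i t2i) //; try lia.
  by rewrite !addrA.
have g1 := SW_ge0 t1i (k - m%:Z); have g2 := SW_ge0 (k + m%:Z + 1) s2i.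
have hlen : (t2 - s1)%:~R <= (t1 - s1)%:~R + (t2 - s2)%:~R + 4 * m%:R + 1 :> R.
  have : t2 - s1 <= (t1 - s1) + (t2 - s2) + 4 * m%:Z + 1 by lia.
  rewrite -(ler_int R) !intrD intrM /=.
  by have -> : (4%:~R : R) = 4 by [].
have hm1R : 1 <= m%:R :> R by rewrite ler1n.
rewrite hsplit.
have : alpha * (t2 - s1)%:~R <= alpha * ((t1 - s1)%:~R + (t2 - s2)%:~R + 4 * m%:R + 1).
  exact: ler_wpM2l.
rewrite !mulrDr mulr1 mulrCA => H.
have : alpha <= alpha * m%:R by rewrite ler_peMr.
move=> H2.
set X1 := SW s1i t1i in L7 *; set X2 := SW t1i _ in g1 *; set X3 := SW (k - _) _ in hcen *.
set X4 := SW _ s2i in g2 *; set X5 := SW s2i t2i in R7 *.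
set Y1 := alpha * (t1 - s1)%:~R in L7 H *; set Y2 := alpha * (t2 - s2)%:~R in R7 H *.
set Z := alpha * m%:R in H H2 hcen *; set Y0 := alpha * (t2 - s1)%:~R in H *.
have h1 : Y0 <= 9 * X1 + 9 * X5 + 5 * X3 by lra.
have h3 : 0 <= X3.
  apply: le_trans hcen; apply: le_trans H2; exact: alpha_ge0.
move: h1 h3 g1 g2; clear; move=> h1 h3 g1 g2; lra.
Qed.

End Cover.


Lemma vecs_uniq K n : uniq (vecs K n).
Proof.
elim: n => [//|n IH]; rewrite vecsS allpairs_uniq ?iota_uniq //.
by move=> [a b] [c e] _ _ /= [-> ->].
Qed.

Lemma vecs_mem K n w : size w = n -> all (fun v => v <= K)%N w -> w \in vecs K n.
Proof.
elim: n w => [|n IH] [|v w] // [hs] /andP [hv hw].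
rewrite vecsS; apply: allpairs_f; last exact: IH.
by rewrite mem_iota /= add0n ltnS.
Qed.

Lemma sum_pick (R : realType) (G : seq nat -> R) (s : seq (seq nat)) y :
  uniq s -> y \in s -> \sum_(w <- s) G w * (y == w)%:R = G y.
Proof.
elim: s => [//|a s IH] /= /andP [ha hu]; rewrite in_cons big_cons.
case: (eqVneq y a) => [-> _|hne /= hy].
  rewrite mulr1 big1_seq ?addr0 // => w /= hw.
  by case: (eqVneq a w) => [hw'|]; [by move: ha; rewrite hw' hw|rewrite mulr0].
by rewrite mulr0 add0r IH.
Qed.

Section Prob.
Context {dT : measure_display} {T : measurableType dT} {R : realType}.
Variables (P : probability T R) (D : int -> T -> nat) (d : nat).
Hypothesis hmeas : nat_rv_family D.
Hypothesis hind : mutually_independent P D.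
Hypothesis hid : identically_distributed P D.

Lemma meas_nat i (h : nat -> \bar R) : measurable_fun [set: T] (fun x : T => h (D i x)).
Proof. by move=> _ B _; rewrite setTI; exact: (hmeas i (h @^-1` B)). Qed.

Variable K : nat.

Definition Yt i x := minn (Dtrunc D d i x) K.
Definition Bset (v : nat) := [set u : nat | minn (u - d) K = v].
Definition qK v : R := fine (P (D 0 @^-1` Bset v)).
Definition Ev (ix : seq int) (w : seq nat) := [set x | map (Yt ^~ x) ix = w].

Lemma qK_ge0 v : 0 <= qK v.
Proof. by rewrite /qK fine_ge0. Qed.

Lemma PE (A : set T) : measurable A -> P A = (fine (P A))%:E.
Proof. by move=> mA; rewrite fineK // fin_num_measure. Qed.

Lemma Ev_cons i ix v w : Ev (i :: ix) (v :: w) = D i @^-1` Bset v `&` Ev ix w.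
Proof.
apply/seteqP; split => x /=; rewrite /Ev /Bset /Yt /Dtrunc /=.
  by case=> h1 h2.
by case=> -> ->.
Qed.

Lemma Ev_meas ix w : measurable (Ev ix w).
Proof.
elim: ix w => [|i ix IH] [|v w].
- by have -> : Ev [::] [::] = setT by apply/seteqP; split.
- by have -> : Ev [::] (v :: w) = set0 by apply/seteqP; split.
- by have -> : Ev (i :: ix) [::] = set0 by apply/seteqP; split.
- by rewrite Ev_cons; apply: measurableI => //; exact: hmeas.
Qed.

Lemma bigcap_cons (F : int -> set T) i ix :
  \bigcap_(j in [set` i :: ix]) F j = F i `&` \bigcap_(j in [set` ix]) F j.
Proof.
apply/seteqP; split => x /=.
  move=> h; split; first by apply: h; rewrite /= in_cons eqxx.
  by move=> j hj; apply: h; rewrite /= in_cons hj orbT.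
by move=> [h1 h2] j; rewrite /= in_cons => /orP [/eqP ->|hj] //; exact: h2.
Qed.

Lemma Ev_form ix w : uniq ix -> size w = size ix ->
  exists F : int -> set nat, Ev ix w = \bigcap_(j in [set` ix]) (D j @^-1` F j).
Proof.
elim: ix w => [|i ix IH] [|v w] //= hu hs.
  exists (fun _ => setT); rewrite (_ : [set` [::]] = set0) ?bigcap_set0.
    by apply/seteqP; split.
  by apply/seteqP; split.
move: hu => /andP [hi hu].
have [F hF] := IH w hu ltac:(by case: hs).
exists (fun j => if j == i then Bset v else F j).
rewrite Ev_cons bigcap_cons eqxx hF; congr (_ `&` _).
apply: eq_bigcapr => j /= hj; case: (eqVneq j i) => // hji.
by move: hi; rewrite -hji hj.
Qed.

Lemma PEv ix w : uniq ix -> size w = size ix -> P (Ev ix w) = (\prod_(v <- w) qK v)%:E.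
Proof.
elim: ix w => [|i ix IH] [|v w] //= hu hs.
  have -> : Ev [::] [::] = setT by apply/seteqP; split.
  by rewrite probability_setT big_nil.
move: (hu) => /andP [hi hu'].
have hs' : size w = size ix by move: hs => /= [].
have [F hF] := Ev_form hu' hs'.
pose F' := fun j => if j == i then Bset v else F j.
have -> : Ev (i :: ix) (v :: w) = \bigcap_(j in [set` i :: ix]) (D j @^-1` F' j).
  rewrite Ev_cons bigcap_cons /F' eqxx hF; congr (_ `&` _).
  apply: eq_bigcapr => j /= hj; case: (eqVneq j i) => // hji.
  by move: hi; rewrite -hji hj.
rewrite hind // !big_cons {1}/F' eqxx.
have -> : (\prod_(j <- ix) P (D j @^-1` F' j) =
          \prod_(j <- ix) P (D j @^-1` F j))%E.
  apply: eq_big_seq => j hj; rewrite /F'; case: (eqVneq j i) => // hji.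
  by move: hi; rewrite -hji hj.
rewrite -hind // -hF IH //.
by rewrite hid PE ?big_cons ?EFinM //; exact: hmeas.
Qed.

Lemma rep_pt ix (G : seq nat -> R) x : uniq ix ->
  (G (map (Yt ^~ x) ix))%:E =
  \sum_(w <- vecs K (size ix)) ((G w)%:E * (\1_(Ev ix w) x)%:E)%E.
Proof.
move=> hu.
under eq_bigr do rewrite -EFinM.
rewrite sumEFin; congr EFin.
have -> : \sum_(w <- vecs K (size ix)) G w * \1_(Ev ix w) x =
          \sum_(w <- vecs K (size ix)) G w * (map (Yt ^~ x) ix == w)%:R.
  apply: eq_bigr => w _; rewrite indicE; congr (_ * _%:R).
  case: (boolP (x \in Ev ix w)) => [/set_mem ->|hn]; first by rewrite eqxx.
  have hne : (map (Yt ^~ x) ix == w) = false.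
    by apply/negP => /eqP h; move/negP: hn; apply; exact: mem_set.
  by rewrite hne.
symmetry; apply: sum_pick; first exact: vecs_uniq.
apply: vecs_mem; first by rewrite size_map.
by rewrite all_map; apply/allP => i _ /=; rewrite /Yt geq_minr.
Qed.

Lemma rep_meas ix (G : seq nat -> R) : uniq ix ->
  measurable_fun setT (fun x => (G (map (Yt ^~ x) ix))%:E).
Proof.
move=> hu.
have -> : (fun x => (G (map (Yt ^~ x) ix))%:E) =
   (fun x => \sum_(w <- vecs K (size ix)) ((G w)%:E * (\1_(Ev ix w) x)%:E)%E).
  by apply/funext => x; exact: rep_pt.
apply: emeasurable_sum => w; apply: emeasurable_funM => //.
apply/measurable_EFinP; apply: measurable_indic; exact: Ev_meas.
Qed.

Lemma vecs_size n w : w \in vecs K n -> size w = n.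
Proof.
elim: n w => [|n IH] w; first by rewrite inE => /eqP ->.
by rewrite vecsS => /allpairsP [[v u] [_ /= hu ->]] /=; rewrite (IH u hu).
Qed.

Lemma rep_int ix (G : seq nat -> R) : uniq ix -> (forall w, 0 <= G w) ->
  (\int[P]_x (G (map (Yt ^~ x) ix))%:E = (En K qK (size ix) G)%:E)%E.
Proof.
move=> hu hG.
under eq_integral do rewrite (rep_pt _ _ hu).
rewrite ge0_integral_sum //; last first.
- by move=> w x _; apply: mule_ge0; rewrite lee_fin // indicE ler0n.
- move=> w; apply: emeasurable_funM => //.
  by apply/measurable_EFinP; apply: measurable_indic; exact: Ev_meas.
rewrite /En -sumEFin big_seq [RHS]big_seq; apply: eq_bigr => w hw.
rewrite ge0_integralZl_EFin //; try (by move=> x _; rewrite lee_fin indicE ler0n);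
  try (by apply/measurable_EFinP; apply: measurable_indic; exact: Ev_meas).
rewrite integral_indic ?setIT; last exact: Ev_meas.
  have H := PEv hu (vecs_size hw).
  by rewrite EFinM; congr (_ * _)%E; exact: H.
exact: measurableT.
Qed.

Lemma En1 (F : seq nat -> R) : En K qK 1 F = \sum_(v <- iota 0 K.+1) qK v * F [:: v].
Proof. by rewrite En_S; apply: eq_bigr => v _; rewrite En0. Qed.

Lemma uniq0 : uniq [:: (0 : int)]. Proof. by []. Qed.

Lemma qK_sum : \sum_(v <- iota 0 K.+1) qK v = 1.
Proof.
have h := rep_int (G := fun _ => 1) uniq0 (fun _ => ler01).
rewrite /= En1 in h.
have h2 : (\int[P]_x (1%:E : \bar R) = 1)%E.
  rewrite (integral_cst P measurableT) mul1e. exact: probability_setT.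
rewrite h2 in h.
have h' : (1 : R) = \sum_(v <- iota 0 K.+1) qK v * 1 by case: h.
by rewrite [RHS]h'; apply: eq_bigr => v _; rewrite mulr1.
Qed.

Lemma m1_le : ((m1 K qK)%:E <= \int[P]_x ((Dtrunc D d 0 x)%:R)%:E)%E.
Proof.
have h := rep_int (G := fun w => (head 0%N w)%:R) uniq0 (fun _ => ler0n _ _).
rewrite /= En1 in h.
have -> : m1 K qK = \sum_(v <- iota 0 K.+1) qK v * (head 0%N [:: v])%:R by [].
rewrite -h; apply: ge0_le_integral => //.
- exact: (meas_nat 0 (fun n => ((minn (n - d) K)%:R)%:E)).
- exact: (meas_nat 0 (fun n => ((n - d)%N%:R)%:E)).
- by move=> x _; rewrite lee_fin ler_nat /Yt geq_minl.
Qed.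

Lemma m2_le : ((\sum_(v <- iota 0 K.+1) qK v * (v%:R) ^+ 2)%:E <=
   \int[P]_x (((D 0 x) ^ 2)%N%:R)%:E)%E.
Proof.
have h := rep_int (G := fun w => ((head 0%N w)%:R) ^+ 2) uniq0 (fun _ => sqr_ge0 _).
rewrite /= En1 in h.
rewrite -h; apply: ge0_le_integral => //.
- exact: (meas_nat 0 (fun n => (((minn (n - d) K)%:R) ^+ 2)%:E)).
- exact: (meas_nat 0 (fun n => ((n ^ 2)%N%:R)%:E)).
- move=> x _; rewrite lee_fin natrX ler_pXn2r ?nnegrE ?ler0n // ler_nat /Yt /Dtrunc.
  exact: (leq_trans (geq_minl _ _) (leq_subr _ _)).
Qed.

End Prob.


Lemma le_integral_nonmeas d (T : measurableType d) (R : realType)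
  (mu : {measure set T -> \bar R}) (f1 f2 : T -> \bar R) :
  (forall x, (0 <= f1 x)%E) -> (forall x, (f1 x <= f2 x)%E) ->
  (\int[mu]_x f1 x <= \int[mu]_x f2 x)%E.
Proof.
move=> f10 f12.
have f20 x : (0 <= f2 x)%E by apply: le_trans (f12 x).
rewrite !ge0_integralE //; apply: le_ereal_sup => _ [h /= hf <-].
exists h => //= x; apply: le_trans (hf x) _.
by rewrite /patch /=; case: ifP.
Qed.

Section Final.
Context {dT : measure_display} {T : measurableType dT} {R : realType}.
Variables (P : probability T R) (D : int -> T -> nat) (alpha : R) (d : nat).
Hypothesis hmeas : nat_rv_family D.
Hypothesis hind : mutually_independent P D.
Hypothesis hid : identically_distributed P D.
Hypothesis halpha : 0 < alpha.

Definition kap := alpha / 18.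
Definition Rlist N := map (fun j : nat => j%:Z) (iota 0 N).
Definition Llist N := map (fun j : nat => - (j%:Z) - 1) (iota 0 N).
Definition MR N x := Mf kap (map (Yt D d N ^~ x) (Rlist N)).
Definition ML N x := Mf kap (map (Yt D d N ^~ x) (Llist N)).
Definition gN N x := ((18 / alpha)%:E * ((ML N x)%:E + (MR N x)%:E))%E.

Lemma Rlist_uniq N : uniq (Rlist N).
Proof. by rewrite map_inj_uniq ?iota_uniq // => a b /= h; lia. Qed.
Lemma Llist_uniq N : uniq (Llist N).
Proof. by rewrite map_inj_uniq ?iota_uniq // => a b /= h; lia. Qed.

Lemma gN_ge0 N x : (0 <= gN N x)%E.
Proof.
apply: mule_ge0; first by rewrite lee_fin divr_ge0 // ltW.
by apply: adde_ge0; rewrite lee_fin Mf_ge0.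
Qed.

Lemma gN_meas N : measurable_fun setT (gN N).
Proof.
apply: emeasurable_funM => //; apply: emeasurable_funD.
- exact: (rep_meas d hmeas N (Mf kap) (Llist_uniq N)).
- exact: (rep_meas d hmeas N (Mf kap) (Rlist_uniq N)).
Qed.

Hypothesis hD2 : (\int[P]_x (((D 0 x) ^ 2)%N%:R)%:E < +oo)%E.
Hypothesis hX : (\int[P]_x ((Dtrunc D d 0 x)%:R)%:E < (alpha / 18)%:E)%E.

Definition mu0 := fine (\int[P]_x ((Dtrunc D d 0 x)%:R)%:E).
Definition V0 := fine (\int[P]_x (((D 0 x) ^ 2)%N%:R)%:E).
Definition Bd := (V0 + kap ^+ 2) / (2 * (kap - mu0)).

Lemma mu0E : (mu0%:E = \int[P]_x ((Dtrunc D d 0 x)%:R)%:E)%E.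
Proof.
rewrite /mu0 fineK // ge0_fin_numE; first exact: (lt_trans hX (ltry _)).
by apply: integral_ge0 => x _; rewrite lee_fin ler0n.
Qed.

Lemma V0E : (V0%:E = \int[P]_x (((D 0 x) ^ 2)%N%:R)%:E)%E.
Proof.
rewrite /V0 fineK // ge0_fin_numE //.
by apply: integral_ge0 => x _; rewrite lee_fin ler0n.
Qed.

Lemma mu0_lt : mu0 < kap.
Proof. by rewrite -lte_fin mu0E. Qed.

Lemma int_M N ix : uniq ix ->
  (\int[P]_x (Mf kap (map (Yt D d N ^~ x) ix))%:E <= Bd%:E)%E.
Proof.
move=> hu.
rewrite (rep_int d hmeas hind hid N (G := Mf kap) hu (@Mf_ge0 _ kap)) lee_fin.
have q0 := qK_ge0 P D d N.
have qs := qK_sum d hmeas hind hid N.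
have hm1 : m1 N (qK P D d N) <= mu0 by rewrite -lee_fin mu0E; exact: (m1_le d hmeas hind hid N).
have hmu := mu0_lt.
have hm1k : m1 N (qK P D d N) < kap by exact: le_lt_trans hm1 hmu.
apply: le_trans (kingman q0 qs hm1k (size ix)) _.
have hm2 : \sum_(v <- iota 0 N.+1) qK P D d N v * (v%:R) ^+ 2 <= V0.
  by rewrite -lee_fin V0E; exact: (m2_le d hmeas hind hid N).
have hk0 : 0 <= kap by rewrite /kap divr_ge0 // ltW.
have hc2 : c2 N (qK P D d N) kap <= V0 + kap ^+ 2.
  apply: le_trans (lerD hm2 (lexx (kap ^+ 2))).
  rewrite /c2 -[X in _ + X]mul1r -qs mulr_suml -big_split /=.
  apply: ler_sum => v _; rewrite -mulrDr; apply: ler_wpM2l => //.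
  have : 0 <= v%:R * kap :> R by rewrite mulr_ge0.
  nra.
have hc20 : 0 <= c2 N (qK P D d N) kap.
  by apply: sumr_ge0 => v _; rewrite mulr_ge0 // sqr_ge0.
have hpos : 0 < 2 * (kap - mu0) by rewrite mulr_gt0 // subr_gt0.
have hpos' : 0 < 2 * (kap - m1 N (qK P D d N)) by rewrite mulr_gt0 // subr_gt0.
rewrite /Bd ler_pdivlMr //; apply: le_trans hc2.
rewrite mulrAC ler_pdivrMr //; apply: ler_wpM2l => //; lra.
Qed.

Lemma size_Rlist N : size (Rlist N) = N. Proof. by rewrite size_map size_iota. Qed.
Lemma size_Llist N : size (Llist N) = N. Proof. by rewrite size_map size_iota. Qed.

Lemma nth_Rlist N j : (j < N)%N -> nth 0 (Rlist N) j = j%:Z.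
Proof. by move=> h; rewrite /Rlist (nth_map 0%N) ?size_iota // nth_iota. Qed.
Lemma nth_Llist N j : (j < N)%N -> nth 0 (Llist N) j = - j%:Z - 1.
Proof. by move=> h; rewrite /Llist (nth_map 0%N) ?size_iota // nth_iota. Qed.

Lemma Yt_mono N N' i x : (N <= N')%N -> (Yt D d N i x <= Yt D d N' i x)%N.
Proof. by rewrite /Yt => h; lia. Qed.

Lemma nth_YR K N x j : (j < N)%N ->
  nth 0%N (map (Yt D d K ^~ x) (Rlist N)) j = Yt D d K j%:Z x.
Proof. by move=> h; rewrite /Rlist -map_comp (nth_map 0%N) ?size_iota // nth_iota. Qed.
Lemma nth_YL K N x j : (j < N)%N ->
  nth 0%N (map (Yt D d K ^~ x) (Llist N)) j = Yt D d K (- j%:Z - 1) x.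
Proof. by move=> h; rewrite /Llist -map_comp (nth_map 0%N) ?size_iota // nth_iota. Qed.

Lemma MR_mono N N' x : (N <= N')%N -> MR N x <= MR N' x.
Proof.
move=> h; apply: Mf_mono; first by rewrite !size_map ?size_iota ?size_Rlist.
move=> j; rewrite size_map size_Rlist => hj.
by rewrite nth_YR // nth_YR ?(leq_trans hj) // Yt_mono.
Qed.

Lemma ML_mono N N' x : (N <= N')%N -> ML N x <= ML N' x.
Proof.
move=> h; apply: Mf_mono; first by rewrite !size_map ?size_iota ?size_Llist.
move=> j; rewrite size_map size_Llist => hj.
by rewrite nth_YL // nth_YL ?(leq_trans hj) // Yt_mono.
Qed.

Lemma gN_nd x : nondecreasing_seq (gN ^~ x).
Proof.
move=> N N' h; rewrite /gN -!EFinD -!EFinM lee_fin ler_wpM2l //.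
  by rewrite divr_ge0 // ltW.
by rewrite lerD // ?ML_mono ?MR_mono.
Qed.

Lemma int_gN N : (\int[P]_x gN N x <= ((18 / alpha) * (Bd + Bd))%:E)%E.
Proof.
rewrite /gN ge0_integralZl_EFin //; last 3 first.
- by move=> x _; apply: adde_ge0; rewrite lee_fin Mf_ge0.
- apply: emeasurable_funD.
  + exact: (rep_meas d hmeas N (Mf kap) (Llist_uniq N)).
  + exact: (rep_meas d hmeas N (Mf kap) (Rlist_uniq N)).
- by rewrite divr_ge0 // ltW.
rewrite ge0_integralD //; last 4 first.
- by move=> x _; rewrite lee_fin Mf_ge0.
- exact: (rep_meas d hmeas N (Mf kap) (Llist_uniq N)).
- by move=> x _; rewrite lee_fin Mf_ge0.
- exact: (rep_meas d hmeas N (Mf kap) (Rlist_uniq N)).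
rewrite (EFinM (18 / alpha)) EFinD.
apply: lee_wpmul2l; first by rewrite lee_fin divr_ge0 // ltW.
by apply: leeD; apply: int_M; [exact: Llist_uniq|exact: Rlist_uniq].
Qed.


End Final.


Definition lo (s : seq int) := foldr Num.min 0 s.
Definition hi (s : seq int) := foldr Num.max 0 s.

Lemma lo_le0 s : lo s <= 0.
Proof. by elim: s => //= a s IH; rewrite ge_min IH orbT. Qed.
Lemma hi_ge0 s : 0 <= hi s.
Proof. by elim: s => //= a s IH; rewrite le_max IH orbT. Qed.
Lemma lo_le s j : j \in s -> lo s <= j.
Proof.
elim: s => //= a s IH; rewrite in_cons => /orP [/eqP ->|h]; rewrite ge_min ?lexx //.
by rewrite IH ?orbT.
Qed.
Lemma hi_ge s j : j \in s -> j <= hi s.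
Proof.
elim: s => //= a s IH; rewrite in_cons => /orP [/eqP ->|h]; rewrite le_max ?lexx //.
by rewrite IH ?orbT.
Qed.
Lemma lo_mem s : lo s = 0 \/ lo s \in s.
Proof.
elim: s => [|a s IH] /=; first by left.
case: (lerP a (lo s)) => h.
  by right; rewrite in_cons eqxx.
case: IH => [->|hm]; first by left.
by right; rewrite in_cons hm orbT.
Qed.
Lemma hi_mem s : hi s = 0 \/ hi s \in s.
Proof.
elim: s => [|a s IH] /=; first by left.
case: (lerP a (hi s)) => h.
  case: IH => [->|hm]; first by left.
  by right; rewrite in_cons hm orbT.
by right; rewrite in_cons eqxx.
Qed.

Lemma size_window (s : seq int) a b : uniq s -> (forall j, j \in s -> a <= j <= b) ->
  a <= b -> (size s <= absz (b - a) + 1)%N.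
Proof.
move=> hu hs hab.
have -> : size s = size (map (fun j => absz (j - a)) s) by rewrite size_map.
rewrite -[(absz (b - a) + 1)%N](size_iota 0); apply: uniq_leq_size.
  rewrite map_inj_in_uniq // => j k hj hk /=.
  by move: (hs j hj) (hs k hk) => /andP [h1 h2] /andP [h3 h4]; lia.
move=> i /mapP [j hj ->]; rewrite mem_iota.
by move: (hs j hj) => /andP [h1 h2]; lia.
Qed.

Lemma leq_term_sum (h : nat -> nat) n i : (i < n)%N -> (h i <= \sum_(0 <= j < n) h j)%N.
Proof.
elim: n => [//|n IH]; rewrite ltnS leq_eqVlt big_nat_recr //= => /orP [/eqP ->|hi].
  exact: leq_addl.
by rewrite (leq_trans (IH hi)) // leq_addr.
Qed.

Section Det.
Context {dT : measure_display} {T : measurableType dT} {R : realType}.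
Variables (D : int -> T -> nat) (alpha : R) (d : nat).
Hypothesis halpha : 0 < alpha.

Lemma det_seq x (s : seq int) : uniq s -> (forall j, j \in s -> cluster0 D d alpha x j) ->
  exists N, (size s)%:R <= (18 / alpha) * (ML D alpha d N x + MR D alpha d N x).
Proof.
move=> hu hs.
case: s hu hs => [|j0 s'] hu hs.
  exists 0%N; apply: mulr_ge0; first by rewrite divr_ge0 // ltW.
  by apply: addr_ge0; exact: Mf_ge0.
set s := j0 :: s' in hu hs *.
set a := lo s; set b := hi s.
have ha0 : a <= 0 by exact: lo_le0.
have hb0 : 0 <= b by exact: hi_ge0.
have hcl0 : claimed D d alpha x 0.
  apply: (hs j0); first by rewrite in_cons eqxx.
  by rewrite ge_min le_max lexx /=.
have hcl : forall p, a <= p -> p <= b -> claimed D d alpha x p.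
  move=> p hap hpb; case: (lerP 0 p) => hp.
    case: (hi_mem s) => hb; first by have -> : p = 0 by rewrite -/b in hb; lia.
    apply: (hs b hb); rewrite ge_min le_max hp hpb /=.
    by rewrite orbT.
  case: (lo_mem s) => ha; first by rewrite -/a in ha; lia.
  apply: (hs a ha); rewrite ge_min le_max hap (ltW hp) /=.
  by rewrite orbT.
have hsize : (size s <= absz (b - a) + 1)%N.
  apply: size_window => //; last by lia.
  by move=> j hj; rewrite lo_le // hi_ge.
have [r hr] : exists r : int -> nat, forall p, claimed D d alpha x p ->
    (1 <= r p)%N /\ alpha * (r p)%:R <=
      \sum_(0 <= t < (2 * r p).+1) (Dtrunc D d (p - (r p)%:Z + t%:Z) x)%:R.
  exists (fun p => match pselect (claimed D d alpha x p) with
                   | left h => projT1 (cid h) | right _ => 0%N end).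
  by move=> p hp; case: pselect => // h; exact: (projT2 (cid h)).
pose f (k : int) : R := (Dtrunc D d k x)%:R.
have f0 : forall k, 0 <= f k by move=> k; rewrite /f ler0n.
have hr' : forall p, a <= p -> p < b + 1 ->
    (0 < r p)%N /\ alpha * (r p)%:R <= SW f (p - (r p)%:Z) (p + (r p)%:Z + 1).
  move=> p h1 h2; have [h3 h4] := hr p (hcl p h1 ltac:(lia)); split => //.
  rewrite /SW.
  have -> : (absz ((p + (r p)%:Z + 1 - (p - (r p)%:Z))%R) = (2 * r p).+1)%N by lia.
  exact: h4.
have [jm hjm hmax] := exists_max (fun j => r (a + j%:Z)) (N := absz (b + 1 - a)%R) ltac:(lia).
have hRb : forall p, a <= p -> p < b + 1 -> (r p <= r (a + jm%:Z)%R)%N.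
  move=> p h1 h2; have := hmax (absz (p - a)%R) ltac:(lia).
  by have -> : a + (absz (p - a)%R)%:Z = p by lia.
have [s0 [t0 [si [ti [[H1 H2 H3 H4 H5] [H6 H7 H8]]]]]] :=
  cover_lem f0 (ltW halpha) hr' (n := absz (b + 1 - a)%R) (a := a) (e := b + 1)
    ltac:(lia) (leqnn _) (lexx a) (lexx (b + 1)) hRb.
have hmass : alpha * (t0 - s0)%:~R <= 9 * (SW f s0 0 + SW f 0 t0).
  rewrite -SW_split; [|lia|lia].
  apply: le_trans H8 _; apply: ler_wpM2l => //; exact: SW_mono.
pose N := (absz s0 + absz t0 + \sum_(0 <= j < absz (t0 - s0)%R) Dtrunc D d (s0 + j%:Z) x)%N.
have hXN : forall k, s0 <= k -> k < t0 -> (Dtrunc D d k x <= N)%N.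
  move=> k h1 h2.
  have := leq_term_sum (fun j => Dtrunc D d (s0 + j%:Z) x) (n := absz (t0 - s0)%R)
     (i := absz (k - s0)%R) ltac:(lia).
  have -> : s0 + (absz (k - s0)%R)%:Z = k by lia.
  by rewrite /N; lia.
have hR : SW f 0 t0 - kap alpha * (absz t0)%:R <= MR D alpha d N x.
  have hk : (absz t0 <= size (map (Yt D d N ^~ x) (Rlist N)))%N.
    by rewrite size_map size_Rlist /N; lia.
  apply: le_trans (@Mf_sum R (kap alpha) _ _ hk); rewrite lerD2r.
  rewrite /SW subr0 le_eqVlt; apply/orP; left; apply/eqP.
  apply: eq_big_nat => j /andP [_ hj].
  rewrite nth_YR; last by rewrite /N; lia.
  rewrite /f /Yt add0r; congr (_%:R); apply/esym/minn_idPl; apply: hXN; lia.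
have hL : SW f s0 0 - kap alpha * (absz s0)%:R <= ML D alpha d N x.
  have hk : (absz s0 <= size (map (Yt D d N ^~ x) (Llist N)))%N.
    by rewrite size_map size_Llist /N; lia.
  apply: le_trans (@Mf_sum R (kap alpha) _ _ hk); rewrite lerD2r.
  rewrite /SW big_nat_rev le_eqVlt; apply/orP; left; apply/eqP.
  have -> : absz (0 - s0)%R = absz s0 by lia.
  apply: eq_big_nat => j /andP [_ hj].
  rewrite nth_YL; last by rewrite /N; lia.
  have -> : s0 + (0 + absz s0 - j.+1)%N%:Z = - j%:Z - 1 by lia.
  rewrite /f /Yt; congr (_%:R); apply/esym/minn_idPl; apply: hXN; lia.
have hT : (absz s0)%:R + (absz t0)%:R = (t0 - s0)%:~R :> R.
  rewrite -natrD.
  have -> : (absz s0 + absz t0)%N = absz (t0 - s0)%R by lia.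
  by rewrite natr_absz ger0_norm //; lia.
have hsz : (size s)%:R <= (t0 - s0)%:~R :> R.
  have -> : (t0 - s0)%:~R = (absz (t0 - s0)%R)%:R :> R.
    by rewrite natr_absz ger0_norm //; lia.
  by rewrite ler_nat; lia.
have hkap : kap alpha * (absz s0)%:R + kap alpha * (absz t0)%:R =
            alpha * (t0 - s0)%:~R / 18.
  by rewrite -mulrDr hT /kap mulrAC.
have key : alpha * (t0 - s0)%:~R <= 18 * (ML D alpha d N x + MR D alpha d N x).
  set U := alpha * (t0 - s0)%:~R in hmass hkap *.
  set K1 := kap alpha * (absz s0)%:R in hL hkap.
  set K2 := kap alpha * (absz t0)%:R in hR hkap.
  lra.
exists N; apply: le_trans hsz _.
rewrite mulrAC ler_pdivlMr // mulrC; exact: key.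
Qed.

End Det.

Lemma sum1_seq (R : realType) (s : seq int) : (\sum_(i <- s) (1 : \bar R) = (size s)%:R%:E)%E.
Proof.
rewrite sumEFin; congr EFin.
by elim: s => [|a s IH]; rewrite ?big_nil // big_cons IH /= addrC natr1.
Qed.

Section Det2.
Context {dT : measure_display} {T : measurableType dT} {R : realType}.
Variables (D : int -> T -> nat) (alpha : R) (d : nat).
Hypothesis halpha : 0 < alpha.

Lemma det_fin x (A : set int) : finite_set A -> A `<=` cluster0 D d alpha x ->
  exists N, (\sum_(i \in A) (1 : \bar R) <= gN D alpha d N x)%E.
Proof.
move=> finA subA; rewrite fsbig_finite //.
set s := finmap.enum_fset (fset_set A).
have hu : uniq s by exact: finmap.fset_uniq.
have hs : forall j, j \in s -> cluster0 D d alpha x j.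
  move=> j hj; apply: subA; rewrite -in_setE -in_fset_set //.
have [N hN] := det_seq halpha hu hs.
by exists N; rewrite sum1_seq /gN -EFinD -EFinM lee_fin.
Qed.
End Det2.


Section Final2.
Context {dT : measure_display} {T : measurableType dT} {R : realType}.
Variables (P : probability T R) (D : int -> T -> nat) (alpha : R) (d : nat).
Hypothesis hmeas : nat_rv_family D.
Hypothesis hind : mutually_independent P D.
Hypothesis hid : identically_distributed P D.
Hypothesis halpha : 0 < alpha.
Hypothesis hD2 : (\int[P]_x (((D 0 x) ^ 2)%N%:R)%:E < +oo)%E.
Hypothesis hX : (\int[P]_x ((Dtrunc D d 0 x)%:R)%:E < (alpha / 18)%:E)%E.

Local Notation gN := (gN D alpha d).
Local Notation det_fin := (det_fin halpha).
Local Notation gN_nd := (gN_nd (P := P) halpha hD2 hX).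
Local Notation gN_meas := (gN_meas d hmeas halpha).
Local Notation gN_ge0 := (gN_ge0 D d halpha).
Local Notation int_gN := (int_gN hmeas hind hid halpha hD2 hX).
Local Notation Bd := (Bd P D alpha d).
Lemma cluster_le x : (cluster_size D d alpha x <= limn (gN ^~ x))%E.
Proof.
have -> : limn (gN ^~ x) = ereal_sup (range (gN ^~ x)).
  by apply/cvg_lim => //; exact: ereal_nondecreasing_cvgn (gN_nd x).
rewrite /cluster_size /esum; apply: ge_ereal_sup => _ [A [finA subA] <-].
have [N hN] := det_fin finA subA.
by apply: le_trans hN _; apply: ereal_sup_ubound; exists N.
Qed.

Lemma main_bound : (\int[P]_x cluster_size D d alpha x < +oo)%E.
Proof.
apply: (@le_lt_trans _ _ (((18 / alpha) * (Bd + Bd))%:E)); last exact: ltry.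
have h0 : forall x, (0 <= cluster_size D d alpha x)%E by move=> x; apply: esum_ge0 => *.
apply: (le_trans (@le_integral_nonmeas _ T R P (cluster_size D d alpha)
   (fun x => limn (gN ^~ x)) h0 cluster_le)).
rewrite (monotone_convergence P measurableT (fun N => gN_meas N) (fun N x _ => gN_ge0 N x)
   (fun x _ => gN_nd x)).
apply: lime_le.
  apply: ereal_nondecreasing_is_cvgn => n m hnm; apply: ge0_le_integral => //.
  - by move=> x _; exact: gN_ge0.
  - exact: gN_meas.
  - exact: gN_meas.
  - by move=> x _; exact: gN_nd.
by apply: nearW => N; exact: int_gN.
Qed.



End Final2.

Theorem proposition4p3 (dT : measure_display) (T : measurableType dT) (R : realType)
  (P : probability T R) (D : int -> T -> nat) (alpha : R) (d : nat) :
  nat_rv_family D ->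
  mutually_independent P D ->
  identically_distributed P D ->
  (\int[P]_x (((D 0 x) ^ 2)%N%:R)%:E < +oo)%E ->
  0 < alpha ->
  (\int[P]_x ((Dtrunc D d 0 x)%:R)%:E < (alpha / 18)%:E)%E ->
  (\int[P]_x cluster_size D d alpha x < +oo)%E.
Proof.
move=> hmeas hind hid hD2 halpha hX.
exact: (main_bound hmeas hind hid halpha hD2 hX).
Qed.
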